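(* Let $n$ be a positive integer and let $A$ be a binary $n\times n$ matrix in which every row has weight at least $9$. Then there is a set $S$ of columns of $A$ with $|S|\le 0.49\,n$ such that, in the $n\times |S|$ submatrix of $A$ formed by the columns in $S$, every row has weight at least $2$.
   Context: A binary matrix has entries in $\{0,1\}$. The weight of a binary vector (row or column) is its number of $1$-entries. *)

(* Defs.v *)
From mathcomp Require Import all_boot all_algebra.
Set Implicit Arguments. Unset Strict Implicit. Unset Printing Implicit Defensive.

Definition row_weight (m n : nat) (A : 'M[bool]_(m, n)) (i : 'I_m) : nat :=
  #|[set j : 'I_n | A i j]|.

Definition sub_row_weight (m n : nat) (A : 'M[bool]_(m, n)) (S : {set 'I_n})
  (i : 'I_m) : nat :=
  #|[set j in S | A i j]|.

(* Main.v *)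
Require Import Defs.
From mathcomp Require Import all_boot all_algebra zify.


Lemma cnt n (F : 'I_n -> pred 'I_5) :
  \sum_(f : {ffun 'I_n -> 'I_5}) [forall j, F j (f j)] = \prod_j #|F j|.
Proof.
have -> : \prod_j #|F j| = #|family F|.
  by rewrite card_family foldrE big_map big_enum.
transitivity #|[set f : {ffun 'I_n -> 'I_5} | [forall j, F j (f j)]]|; last first.
  apply: eq_card => f; rewrite inE; apply/forallP/familyP => H j; exact: H.
rewrite -sum1_card [RHS]big_mkcond /=; apply: eq_bigr => f _.
by rewrite inE; case: [forall j, _].
Qed.

Lemma card_sub (T : finType) (A : {set T}) k : k <= #|A| ->
  exists B : {set T}, B \subset A /\ #|B| = k.
Proof.
move/card_geqP=> [s [us ss sA]]; exists [set x in s]; split.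
  by apply/subsetP=> x; rewrite inE => /sA.
by rewrite cardsE; move/card_uniqP: us ->.
Qed.

Lemma card_bigcup_le (T : finType) (I : Type) (r : seq I) (F : I -> {set T}) :
  #|\bigcup_(i <- r) F i| <= \sum_(i <- r) #|F i|.
Proof.
elim: r => [|a r IH]; first by rewrite !big_nil cards0.
rewrite !big_cons; apply: leq_trans (leq_card_setU _ _) _.
by rewrite leq_add2l.
Qed.

Lemma prod_if n (R : {set 'I_n}) a b :
  \prod_j (if j \in R then a else b) = a ^ #|R| * b ^ (n - #|R|).
Proof.
rewrite (bigID (mem R)) /=.
rewrite (eq_bigr (fun=> a)); last by move=> i ->.
rewrite [X in _ * X](eq_bigr (fun=> b)); last by move=> i /negbTE ->.
rewrite !prod_nat_const; congr (_ * _ ^ _).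
have H := cardsC R; rewrite card_ord in H.
rewrite (_ : #|_| = #|~: R|); first by move: H; set a1 := #|R|; set b1 := #|~: R|; lia.
by apply: eq_card => x; rewrite !inE.
Qed.

Lemma c3 : #|[pred x : 'I_5 | 2 <= x]| = 3.
Proof. rewrite -sum1_card. by rewrite big_mkcond /= !big_ord_recr big_ord0. Qed.
Lemma c2 : #|[pred x : 'I_5 | x < 2]| = 2.
Proof. rewrite -sum1_card. by rewrite big_mkcond /= !big_ord_recr big_ord0. Qed.
Lemma c5 : #|[pred x : 'I_5 | true]| = 5.
Proof. by rewrite -sum1_card big_mkcond /= !big_ord_recr big_ord0. Qed.

Lemma card_T n (f : {ffun 'I_n -> 'I_5}) : #|[set j | f j < 2]| = \sum_j (f j < 2).
Proof. by rewrite -sum1_card big_mkcond /=; apply: eq_bigr => j _; rewrite inE; case: (f j < 2). Qed.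

Lemma sum_constT (T : finType) c : \sum_(x : T) c = #|T| * c.
Proof. by rewrite big_const iter_addn_0 mulnC cardE. Qed.

Lemma count_T n (j : 'I_n) : 0 < n ->
  5 * \sum_(f : {ffun 'I_n -> 'I_5}) (f j < 2) = 2 * 5 ^ n.
Proof.
move=> n0.
pose F : 'I_n -> pred 'I_5 := fun k => if k == j then (fun x : 'I_5 => x < 2) else (fun _ => true).
rewrite (eq_bigr (fun f : {ffun 'I_n -> 'I_5} => nat_of_bool [forall k, F k (f k)])); last first.
  move=> f _; congr nat_of_bool; apply/idP/forallP => [h k|h].
    by have [->|ne] := eqVneq k j; rewrite /F ?eqxx ?(negbTE ne).
  by move: (h j); rewrite /F eqxx.
rewrite cnt (bigD1 j) //= {1}/F eqxx c2.
rewrite (eq_bigr (fun=> 5)); last by move=> k /negbTE hk; rewrite /F hk c5.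
rewrite prod_nat_const cardC1 card_ord mulnCA -expnS prednK //.
Qed.

Lemma deficit n (R : {set 'I_n}) : #|R| = 9 ->
  3 * \sum_(f : {ffun 'I_n -> 'I_5}) (2 - #|R :&: [set j | f j < 2]|)
    <= 24 * (3^9 * 5^(n-9)).
Proof.
move=> HR.
pose F1 : 'I_n -> pred 'I_5 := fun j => if j \in R then (fun x : 'I_5 => 2 <= x) else (fun _ => true).
pose F2 (j0 : 'I_n) : 'I_n -> pred 'I_5 := fun j => if j == j0 then (fun x : 'I_5 => x < 2) else F1 j.
have pt (f : {ffun 'I_n -> 'I_5}) : 2 - #|R :&: [set j | f j < 2]| <=
    2 * [forall j, F1 j (f j)] + \sum_(j0 in R) [forall j, F2 j0 j (f j)].
  case: (ltnP 1 #|R :&: [set j | f j < 2]|) => [h2|].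
    by rewrite (_ : 2 - _ = 0) //; apply/eqP; rewrite subn_eq0.
  rewrite leq_eqVlt ltnS leqn0 => /orP [/eqP h1 | /eqP h0].
    have [j0 E] : exists j0, R :&: [set j | f j < 2] = [set j0] by apply/cards1P; rewrite h1.
    have : j0 \in R :&: [set j | f j < 2] by rewrite E set11.
    rewrite !inE => /andP [j0R fj0].
    have term : [forall j, F2 j0 j (f j)].
      apply/forallP => j; rewrite /F2; have [->|ne] := eqVneq j j0; first by [].
      rewrite /F1; case: ifP => // jR; rewrite leqNgt; apply/negP => fj.
      have : j \in R :&: [set j | f j < 2] by rewrite !inE jR fj.
      by rewrite E inE (negbTE ne).
    rewrite (bigD1 j0) //= term h1; lia.
  have E : R :&: [set j | f j < 2] = set0 by apply/eqP; rewrite -cards_eq0 h0.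
  have term : [forall j, F1 j (f j)].
    apply/forallP => j; rewrite /F1; case: ifP => // jR; rewrite leqNgt; apply/negP => fj.
    have : j \in R :&: [set j | f j < 2] by rewrite !inE jR fj.
    by rewrite E inE.
  rewrite term h0; lia.
have P1 : \prod_j #|F1 j| = 3^9 * 5^(n-9).
  rewrite (eq_bigr (fun j => if j \in R then 3 else 5)) ?prod_if ?HR //.
  by move=> j _; rewrite /F1; case: ifP => _; [exact: c3|exact: c5].
have P2 j0 : j0 \in R -> 3 * \prod_j #|F2 j0 j| = 2 * (3^9 * 5^(n-9)).
  move=> hj0; rewrite -P1 (bigD1 j0) //= [in RHS](bigD1 j0) //= {1}/F2 eqxx c2.
  rewrite {1}/F1 hj0 c3 mulnCA; congr (_ * (_ * _)); apply: eq_bigr => j /negbTE hj.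
  by rewrite /F2 hj.
have Hs : \sum_(f : {ffun 'I_n -> 'I_5}) (2 - #|R :&: [set j | f j < 2]|) <=
  \sum_(f : {ffun 'I_n -> 'I_5}) (2 * [forall j, F1 j (f j)] + \sum_(j0 in R) [forall j, F2 j0 j (f j)]).
  by apply: leq_sum => f _; exact: pt.
apply: leq_trans (leq_mul (leqnn 3) Hs) _.
rewrite big_split /= -big_distrr /= exchange_big /= cnt P1 mulnDr.
rewrite big_distrr /= (eq_bigr (fun=> 2 * (3^9*5^(n-9)))); last first.
  by move=> j0 hj0; rewrite cnt P2.
rewrite sum_nat_const HR.
set X := 3^9 * 5^(n-9); lia.
Qed.

Theorem theorem3p1 (n : nat) (A : 'M[bool]_n) :
  0 < n ->
  (forall i : 'I_n, 9 <= row_weight A i) ->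
  exists S : {set 'I_n},
    100 * #|S| <= 49 * n /\ (forall i : 'I_n, 2 <= sub_row_weight A S i).
Proof.
move=> n0 Hw.
have n9 : 9 <= n.
  apply: leq_trans (Hw (Ordinal n0)) _; rewrite /row_weight.
  by rewrite -[X in _ <= X](card_ord n) max_card.
pose R i := odflt set0 [pick B : {set 'I_n} | (B \subset [set j | A i j]) && (#|B| == 9)].
have HR i : R i \subset [set j | A i j] /\ #|R i| = 9.
  rewrite /R; case: pickP => [B /andP[h1 /eqP h2]|h] //=.
  have [B [h1 h2]] := @card_sub _ _ _ (Hw i).
  by move: (h B); rewrite h1 h2 eqxx.
pose T (f : {ffun 'I_n -> 'I_5}) := [set j | f j < 2].
pose c f i := #|R i :&: T f|.
pose val f := #|T f| + \sum_i (2 - c f i).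
have key : exists f, 100 * val f <= 49 * n.
  case: (boolP [exists f, 100 * val f <= 49 * n]) => [/existsP //|/existsPn H].
  exfalso.
  have H1 : \sum_(f : {ffun 'I_n -> 'I_5}) (49 * n + 1) <= \sum_f 100 * val f.
    by apply: leq_sum => f _; move: (H f); rewrite -ltnNge addn1.
  rewrite sum_constT card_ffun !card_ord -big_distrr /= in H1.
  have S1 : 5 * \sum_f #|T f| = n * (2 * 5 ^ n).
    rewrite (eq_bigr (fun f : {ffun 'I_n -> 'I_5} => \sum_j (f j < 2))); last by move=> f _; rewrite card_T.
    rewrite exchange_big big_distrr /= (eq_bigr (fun=> 2 * 5 ^ n)); last first.
      by move=> j _; rewrite count_T.
    by rewrite sum_constT card_ord.
  have S2 : 3 * \sum_i \sum_f (2 - c f i) <= n * (24 * (3^9 * 5^(n-9))).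
    rewrite big_distrr /=.
    have Hs : \sum_i 3 * \sum_f (2 - c f i) <= \sum_(i : 'I_n) 24 * (3^9 * 5^(n-9)).
      by apply: leq_sum => i _; exact: (@deficit _ _ (HR i).2).
    by apply: leq_trans Hs _; rewrite sum_constT card_ord.
  have V : \sum_f val f = \sum_f #|T f| + \sum_i \sum_f (2 - c f i).
    by rewrite big_split /= exchange_big.
  have E5 : 5 ^ n = 5 ^ 9 * 5 ^ (n - 9) by rewrite -expnD subnKC.
  rewrite V E5 in H1; rewrite E5 in S1.
  move: H1 S1 S2; set X := 5 ^ (n - 9); set a := \sum_f #|T f|; set b := \sum_i _.
  nia.
case: key => f Hf.
have exF i : exists F : {set 'I_n}, F \subset R i :\: T f /\ #|F| = 2 - c f i.
  apply: card_sub; rewrite cardsD (HR i).2.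
  have : c f i <= 9 by rewrite -(HR i).2 subset_leq_card // subsetIl.
  rewrite /c; lia.
pose Fi i := odflt set0 [pick F : {set 'I_n} | (F \subset R i :\: T f) && (#|F| == 2 - c f i)].
have HF i : Fi i \subset R i :\: T f /\ #|Fi i| = 2 - c f i.
  rewrite /Fi; case: pickP => [B /andP[h1 /eqP h2]|h] //=.
  have [B [h1 h2]] := exF i.
  by move: (h B); rewrite h1 h2 eqxx.
exists (T f :|: \bigcup_i Fi i); split.
  apply: leq_trans Hf; rewrite leq_mul2l /=.
  apply: leq_trans (leq_card_setU _ _) _; rewrite leq_add2l.
  apply: leq_trans (@card_bigcup_le _ _ _ _) _.
  by rewrite leq_eqVlt; apply/orP; left; apply/eqP; apply: eq_bigr => i _; rewrite (HF i).2.
move=> i; rewrite /sub_row_weight.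
have sub : (R i :&: T f) :|: Fi i \subset [set j in T f :|: \bigcup_i Fi i | A i j].
  apply/subsetP => x; rewrite !inE => /orP [/andP [xR xT]|xF].
    rewrite xT /=; have := subsetP (HR i).1 x xR; by rewrite inE.
  have := subsetP (HF i).1 x xF; rewrite !inE => /andP [_ xR].
  have := subsetP (HR i).1 x xR; rewrite inE => ->; rewrite andbT.
  by apply/orP; right; apply/bigcupP; exists i.
apply: leq_trans (subset_leq_card sub).
have dis : (R i :&: T f) :&: Fi i = set0.
  apply/setP => x; rewrite !inE; apply/negP => /andP [/andP [_ xT] xF].
  by have := subsetP (HF i).1 x xF; rewrite !inE xT.
rewrite cardsU dis cards0 subn0 (HF i).2 /c; lia.
Qed.
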